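(* Let $G$ act by homeomorphisms on a Hausdorff space $M$. For any finite subset $F\subset G$ and any finitary point coders $\mathcal{Q},\mathcal{Q}'$ for this action, there is $N\in\mathbb{N}$ such that the following holds. Let $(g_0,\mathbf c)$ be a generalized $\mathcal{Q}'$-coding of a point $p\in M$ with path sequence $(g_k)_{k\ge0}$ and terminal vertex sequence $(z_k)_{k\ge1}$, and let $(h_0,\mathbf d)$ be a generalized $\mathcal{Q}$-coding of the same point $p$ with path sequence $(h_k)_{k\ge0}$ and terminal vertex sequence $(y_k)_{k\ge1}$. Then for all $m,n\in\mathbb{N}$ with $g_n^{-1}h_m\in F$, \[g_{n+N}\,\overline{W(z_{n+N})}\subset h_mW(y_m).\]
   Context: A finitary point coder $\mathcal{Q}$ for an action of a group $G$ by homeomorphisms on a Hausdorff space $M$ consists of a finite collection of open subsets of $M$, a finite subset $F(\mathcal{Q})\subset G$, and a finite directed graph whose vertices $v$ are labeled by open sets $W(v)$ from that collection and whose edges $e$ are labeled by elements $\mathrm{Lab}(e)\in F(\mathcal{Q})$, such that: (a) whenever there is an edge from $z_1$ to $z_2$ labeled $\alpha$, $\alpha\overline{W(z_2)}\subset W(z_1)$; (b) for every infinite edge path $\mathbf e=(e_k)_{k\ge1}$ with $z_k=\tau(e_k)$ (terminal vertex of $e_k$) and $\alpha_k=\mathrm{Lab}(e_k)$, the sets $\alpha_1\cdots\alpha_nW(z_n)$, $n\in\mathbb{N}$, form a neighborhood basis of some point $p\in M$; such a path is called a strict $\mathcal{Q}$-coding of $p$. A generalized $\mathcal{Q}$-coding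 is a pair $(g_0,\mathbf e)$ with $g_0\in G$ and $\mathbf e$ a strict $\mathcal{Q}$-coding; if $\mathbf e$ codes $p$, then $(g_0,\mathbf e)$ codes $g_0p$. Its terminal vertex sequence is that of $\mathbf e$, and its path sequence is $g_k:=g_0\alpha_1\cdots\alpha_k$, $k\ge0$. *)

(* Defs.v *)
From HB Require Import structures.
From mathcomp Require Import all_boot all_order all_algebra.
From mathcomp Require Import all_classical all_reals topology.
Set Implicit Arguments. Unset Strict Implicit. Unset Printing Implicit Defensive.
Local Open Scope classical_set_scope.
Local Open Scope group_scope.

(* [act] is an action of G on M by homeomorphisms (each act g is continuous,
   with continuous inverse act g^-1 by the action axioms). *)
Definition action_by_homeos (G : groupType) (M : topologicalType)
  (act : G -> M -> M) : Prop :=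
  (forall x, act 1 x = x) /\
  (forall g h x, act (g * h) x = act g (act h x)) /\
  (forall g, continuous (act g)).

(* A finitary point coder: finite directed graph (finite vertex type [cV],
   finite edge type [cE], source/target maps), vertex labels [cW] by open sets
   (a finite collection, being indexed by a finite type), edge labels [cLab]
   in G (F(Q) = image of cLab, finite).  Infinite edge paths are indexed
   from 0: [e k] is the paper's e_{k+1}. *)
Record point_coder (G : groupType) (M : topologicalType) (act : G -> M -> M) :=
  PointCoder {
  cV : finType;
  cE : finType;
  csrc : cE -> cV;
  ctgt : cE -> cV;
  cW : cV -> set M;
  cLab : cE -> G }.

Section Coding.
Variables (G : groupType) (M : topologicalType) (act : G -> M -> M).
Variable Q : point_coder act.

Definition edge_path (e : nat -> cE Q) : Prop :=
  forall k, ctgt (e k) = csrc (e k.+1).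

Fixpoint path_seq (g0 : G) (e : nat -> cE Q) (k : nat) : G :=
  match k with
  | 0 => g0
  | k'.+1 => path_seq g0 e k' * cLab (e k')
  end.

(* terminal vertex sequence z_k = tau(e_k), meaningful for k >= 1 *)
Definition term_vertex (e : nat -> cE Q) (k : nat) : cV Q := ctgt (e k.-1).

Definition nbhs_basis (p : M) (B : nat -> set M) : Prop :=
  (forall n, (0 < n)%N -> nbhs p (B n)) /\
  (forall U, nbhs p U -> exists2 n, (0 < n)%N & B n `<=` U).

Definition strict_codes (e : nat -> cE Q) (p : M) : Prop :=
  edge_path e /\
  nbhs_basis p (fun n => act (path_seq 1 e n) @` cW (term_vertex e n)).

Definition gen_codes (g0 : G) (e : nat -> cE Q) (p : M) : Prop :=
  exists2 q, strict_codes e q & act g0 q = p.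

Definition is_finitary_point_coder : Prop :=
  (forall v : cV Q, open (cW v)) /\
  (forall ed : cE Q, act (cLab ed) @` closure (cW (ctgt ed)) `<=` cW (csrc ed)) /\
  (forall e, edge_path e -> exists p, strict_codes e p).

End Coding.

(* Main.v *)
Require Import Defs.
From HB Require Import structures.
From mathcomp Require Import all_boot all_order all_algebra.
From mathcomp Require Import all_classical all_reals topology.
From mathcomp Require Import finmap.
Local Open Scope classical_set_scope.
Local Open Scope group_scope.
Set Implicit Arguments. Unset Strict Implicit. Unset Printing Implicit Defensive.

Definition infn (S : set nat) := forall M, exists N, (M <= N)%N /\ S N.

Lemma pigeon (T : finType) (S : set nat) (x : nat -> T) :
  infn S -> exists t, infn (S `&` [set N | x N = t]).
Proof.
move=> HS; apply: contrapT => H.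
have H' : forall t, exists M, forall N, (M <= N)%N -> S N -> x N <> t.
  move=> t; apply: contrapT => nM; apply: H; exists t => M.
  apply: contrapT => nN; apply: nM; exists M => N MN SN eq.
  by apply: nN; exists N.
have [Mt HMt] := choice H'.
have [N [MN SN]] := HS (\max_(t : T) Mt t)%N.
apply: (HMt (x N) N) => //.
apply: leq_trans MN; exact: (@leq_bigmax _ Mt (x N)).
Qed.

Definition ksel (T : finType) (s : nat -> nat -> T) (S : set nat) (k : nat) : T :=
  xget (s 0%N 0%N) (fun t => infn (S `&` [set N | s N k = t])).

Fixpoint kS (T : finType) (s : nat -> nat -> T) (k : nat) : set nat :=
  match k with
  | 0 => setT
  | k'.+1 => @kS T s k' `&` [set N | s N k' = ksel s (@kS T s k') k']
  end.

Lemma kS_inf (T : finType) (s : nat -> nat -> T) k : infn (kS s k).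
Proof.
elim: k => [|k IH] /=; first by move=> M; exists M.
have [t Ht] := pigeon (fun N => s N k) IH.
rewrite /ksel; case: xgetP => [y _ Hy //|Hn]; by case: (Hn t).
Qed.

Lemma kS_agree (T : finType) (s : nat -> nat -> T) k N :
  kS s k N -> forall i, (i < k)%N -> s N i = ksel s (kS s i) i.
Proof.
elim: k => [|k IH] //= [H1 H2] i; rewrite ltnS leq_eqVlt => /orP [/eqP -> //|].
exact: IH.
Qed.

Lemma konig (T : finType) (s : nat -> nat -> T) :
  exists sl : nat -> T, forall k M, exists N, (M <= N)%N /\
    forall i, (i < k)%N -> s N i = sl i.
Proof.
exists (fun i => ksel s (kS s i) i) => k M.
have [N [MN HN]] := kS_inf s k M.
exists N; split => //; exact: kS_agree HN.
Qed.

Lemma nat_bounded (S : set nat) : finite_set S -> exists n, forall k, S k -> (k <= n)%N.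
Proof.
move=> fS; exists (\max_(k <- finmap.enum_fset (fset_set S)) k)%N => k Sk.
apply: (@leq_bigmax_seq _ _ xpredT (fun k => k)) => //.
have h : k \in fset_set S by rewrite in_fset_set //; apply/mem_set.
exact: h.
Qed.

Section dummy. End dummy.

Lemma actM (G : groupType) (M : topologicalType) (act : G -> M -> M)
  (Hact : action_by_homeos act) g h x : act (g * h) x = act g (act h x).
Proof. by case: Hact => _ [->]. Qed.

Lemma act1 (G : groupType) (M : topologicalType) (act : G -> M -> M)
  (Hact : action_by_homeos act) x : act 1 x = x.
Proof. by case: Hact => ->. Qed.

Lemma actK (G : groupType) (M : topologicalType) (act : G -> M -> M)
  (Hact : action_by_homeos act) g x : act g^-1 (act g x) = x.
Proof. by rewrite -(actM Hact) mulVg (act1 Hact). Qed.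

Lemma actKV (G : groupType) (M : topologicalType) (act : G -> M -> M)
  (Hact : action_by_homeos act) g x : act g (act g^-1 x) = x.
Proof. by rewrite -(actM Hact) mulgV (act1 Hact). Qed.

Lemma path_seqE (G : groupType) (M : topologicalType) (act : G -> M -> M)
  (Q : point_coder act) g0 (c : nat -> cE Q) k :
  path_seq g0 c k = g0 * path_seq 1 c k.
Proof.
elim: k => [|k IH] /=; first by rewrite mulg1.
by rewrite IH mulgA.
Qed.

Lemma path_seq_shift (G : groupType) (M : topologicalType) (act : G -> M -> M)
  (Q : point_coder act) g0 (c : nat -> cE Q) n k :
  path_seq g0 c (n + k) = path_seq g0 c n * path_seq 1 (fun i => c (n + i)%N) k.
Proof.
elim: k => [|k IH] /=; first by rewrite addn0 mulg1.
by rewrite addnS /= IH mulgA.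
Qed.

Lemma path_seq_agree (G : groupType) (M : topologicalType) (act : G -> M -> M)
  (Q : point_coder act) (c c' : nat -> cE Q) k :
  (forall i, (i < k)%N -> c i = c' i) -> path_seq 1 c k = path_seq 1 c' k.
Proof.
elim: k => [|k IH] //= H.
rewrite IH ?H // => i ik; apply: H; exact: ltnW.
Qed.

Lemma tv_agree (G : groupType) (M : topologicalType) (act : G -> M -> M)
  (Q : point_coder act) (c c' : nat -> cE Q) k :
  (forall i, (i < k)%N -> c i = c' i) -> (0 < k)%N -> term_vertex c k = term_vertex c' k.
Proof.
by case: k => // k H _; rewrite /term_vertex /= H.
Qed.

Lemma tv_shift (G : groupType) (M : topologicalType) (act : G -> M -> M)
  (Q : point_coder act) (c : nat -> cE Q) n k :
  (0 < k)%N -> term_vertex c (n + k) = term_vertex (fun i => c (n + i)%N) k.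
Proof.
by case: k => // k _; rewrite /term_vertex addnS.
Qed.

Definition Bs (G : groupType) (M : topologicalType) (act : G -> M -> M)
  (Q : point_coder act) (c : nat -> cE Q) k :=
  act (path_seq 1 c k) @` cW (term_vertex c k).

Definition Bcs (G : groupType) (M : topologicalType) (act : G -> M -> M)
  (Q : point_coder act) (c : nat -> cE Q) k :=
  act (path_seq 1 c k) @` closure (cW (term_vertex c k)).

Lemma B_Bc (G : groupType) (M : topologicalType) (act : G -> M -> M)
  (Q : point_coder act) (c : nat -> cE Q) k : Bs c k `<=` Bcs c k.
Proof.
move=> y [w Hw <-]; exists w => //; exact: subset_closure.
Qed.

Lemma stepB (G : groupType) (M : topologicalType) (act : G -> M -> M)
  (Hact : action_by_homeos act) (Q : point_coder act)
  (HQ : is_finitary_point_coder Q) (c : nat -> cE Q) k :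
  edge_path c -> (0 < k)%N -> Bcs c k.+1 `<=` Bs c k.
Proof.
move=> ec k0 y [w Hw <-].
rewrite /= (actM Hact); exists (act (cLab (c k)) w) => //.
case: HQ => _ [Ha _].
have -> : term_vertex c k = csrc (c k).
  by rewrite /term_vertex ec prednK.
apply: Ha; exists w => //.
Qed.

Lemma nestB (G : groupType) (M : topologicalType) (act : G -> M -> M)
  (Hact : action_by_homeos act) (Q : point_coder act)
  (HQ : is_finitary_point_coder Q) (c : nat -> cE Q) k k' :
  edge_path c -> (0 < k)%N -> (k <= k')%N -> Bs c k' `<=` Bs c k.
Proof.
move=> ec k0 /subnKC <-; elim: (k' - k)%N => [|j IH]; first by rewrite addn0.
rewrite addnS => y Hy; apply: IH.
apply: (stepB Hact HQ ec); first by rewrite addn_gt0 k0.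
exact: B_Bc.
Qed.

Lemma nestBc (G : groupType) (M : topologicalType) (act : G -> M -> M)
  (Hact : action_by_homeos act) (Q : point_coder act)
  (HQ : is_finitary_point_coder Q) (c : nat -> cE Q) k k' :
  edge_path c -> (0 < k)%N -> (k <= k')%N -> Bcs c k' `<=` Bcs c k.
Proof.
move=> ec k0 /subnKC <-; elim: (k' - k)%N => [|j IH]; first by rewrite addn0.
rewrite addnS => y Hy; apply: IH.
apply: B_Bc; apply: (stepB Hact HQ ec); first by rewrite addn_gt0 k0.
exact: Hy.
Qed.

Lemma codes_src (G : groupType) (M : topologicalType) (act : G -> M -> M)
  (Q : point_coder act) (HQ : is_finitary_point_coder Q) (d : nat -> cE Q) q :
  strict_codes d q -> cW (csrc (d 0%N)) q.
Proof.
case=> _ [Hn _].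
have := nbhs_singleton (Hn 1%N isT) => -[w Hw <-].
rewrite /= mul1g.
case: HQ => _ [Ha _]; apply: Ha; exists w => //; exact: subset_closure.
Qed.

Definition Good (G : groupType) (M : topologicalType) (act : G -> M -> M)
  (Q Q' : point_coder act) (f : G) (N : nat) : Prop :=
  forall (c : nat -> cE Q') (d : nat -> cE Q) (x : M), edge_path c -> edge_path d ->
  (forall k, (0 < k)%N -> Bs c k x) ->
  (forall k, (0 < k)%N -> (act f @` Bs d k) x) ->
  Bcs c N `<=` act f @` cW (csrc (d 0%N)).

Lemma Good_mono (G : groupType) (M : topologicalType) (act : G -> M -> M)
  (Hact : action_by_homeos act) (Q Q' : point_coder act)
  (HQ' : is_finitary_point_coder Q') f N N' :
  Good Q Q' f N -> (0 < N)%N -> (N <= N')%N -> Good Q Q' f N'.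
Proof.
move=> HG N0 NN' c d x ec ed hc hd y hy.
apply: (HG c d x) => //; exact: (nestBc Hact HQ' ec N0 NN').
Qed.

Lemma Good_ex (G : groupType) (M : topologicalType) (act : G -> M -> M)
  (Hact : action_by_homeos act) (HM : hausdorff_space M)
  (Q Q' : point_coder act)
  (HQ : is_finitary_point_coder Q) (HQ' : is_finitary_point_coder Q') f :
  exists N, (0 < N)%N /\ Good Q Q' f N.
Proof.
apply: contrapT => Hno.
have H : forall N : nat, exists t : (nat -> cE Q') * (nat -> cE Q) * M * M,
  [/\ edge_path t.1.1.1, edge_path t.1.1.2,
      (forall k, (0 < k)%N -> Bs t.1.1.1 k t.1.2),
      (forall k, (0 < k)%N -> (act f @` Bs t.1.1.2 k) t.1.2) &
      Bcs t.1.1.1 N.+1 t.2 /\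
      ~ (act f @` cW (csrc (t.1.1.2 0%N))) t.2].
  move=> N; apply: contrapT => nex; apply: Hno; exists N.+1; split => //.
  move=> c d x ec ed hc hd y hy; apply: contrapT => ny; apply: nex.
  by exists (c, d, x, y).
have [T HT] := choice H.
pose cs N := (T N).1.1.1. pose ds N := (T N).1.1.2.
pose xs N := (T N).1.2. pose ys N := (T N).2.
have [sl Hsl] := konig (fun N i => (cs N i, ds N i)).
pose ci i := (sl i).1. pose di i := (sl i).2.
have kon : forall k M0, exists N, (M0 <= N)%N /\
    forall i, (i < k)%N -> cs N i = ci i /\ ds N i = di i.
  move=> k M0; have [N [MN HN]] := Hsl k M0; exists N; split => // i ik.
  by rewrite /ci /di; have /= <- := HN i ik.
have eci : edge_path ci.
  move=> k; have [N [_ HN]] := kon k.+2 0%N.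
  have [<- _] := HN k (ltnW (ltnSn _)).
  have [<- _] := HN k.+1 (ltnSn _).
  by case: (HT N) => e _ _ _ _; exact: e.
have edi : edge_path di.
  move=> k; have [N [_ HN]] := kon k.+2 0%N.
  have [_ <-] := HN k (ltnW (ltnSn _)).
  have [_ <-] := HN k.+1 (ltnSn _).
  by case: (HT N) => _ e _ _ _; exact: e.
case: HQ' => [HW' [Ha' Hc']]; case: HQ => [HW [Ha Hc]].
have [q Hq] := Hc' ci eci. have [qs Hqs] := Hc di edi.
have Bagree : forall N k, (0 < k)%N -> (forall i, (i < k)%N -> cs N i = ci i /\ ds N i = di i) ->
    Bs (cs N) k = Bs ci k /\ Bs (ds N) k = Bs di k.
  move=> N k k0 HN; rewrite /Bs.
  rewrite (path_seq_agree (c := cs N) (c' := ci)); last by move=> i /HN [].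
  rewrite (path_seq_agree (c := ds N) (c' := di)); last by move=> i /HN [].
  rewrite (tv_agree (c := cs N) (c' := ci)) //; last by move=> i /HN [].
  by rewrite (tv_agree (c := ds N) (c' := di)) //; move=> i /HN [].
have Bcagree : forall N k, (0 < k)%N -> (forall i, (i < k)%N -> cs N i = ci i) ->
    Bcs (cs N) k = Bcs ci k.
  move=> N k k0 HN; rewrite /Bcs.
  rewrite (path_seq_agree (c := cs N) (c' := ci)) //.
  by rewrite (tv_agree (c := cs N) (c' := ci)).
have HQ'f : is_finitary_point_coder Q' by [].
have HQf : is_finitary_point_coder Q by [].
have qeq : q = act f qs.
  apply: HM => A B nA nB.
  have [k1 k10 Hk1] := Hq.2.2 A nA.
  have nB' : nbhs qs (act f @^-1` B) by exact: Hact.2.2.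
  have [k2 k20 Hk2] := Hqs.2.2 _ nB'.
  have [N [_ HN]] := kon (k1 + k2)%N 0%N.
  have k0 : (0 < k1 + k2)%N by rewrite addn_gt0 k10.
  have [e1 e2] := Bagree N _ k0 HN.
  have [_ _ hx hxf _] := HT N.
  exists (xs N); split.
    apply: Hk1; apply: (nestB Hact HQ'f eci k10 (leq_addr k2 k1)).
    by move: (hx _ k0); rewrite e1.
  have [w Hw Hwe] := hxf _ k0.
  rewrite /xs -Hwe; apply: (Hk2 w).
  apply: (nestB Hact HQf edi k20 (leq_addl k1 k2)); by move: Hw; rewrite e2.
have HU : open (act f @` cW (csrc (di 0%N))).
  have -> : act f @` cW (csrc (di 0%N)) = act f^-1 @^-1` cW (csrc (di 0%N)).
    apply/seteqP; split => y.
      by move=> [w Hw <-]; rewrite /= (actK Hact).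
    by move=> Hy; exists (act f^-1 y) => //; rewrite (actKV Hact).
  apply: open_comp; last exact: HW.
  move=> y _; exact: Hact.2.2.
have nU : nbhs q (act f @` cW (csrc (di 0%N))).
  apply: open_nbhs_nbhs; split => //.
  rewrite qeq; exists qs => //; exact: codes_src Hqs.
have [k k0 Hk] := Hq.2.2 _ nU.
have [N [kN HN]] := kon k k.
have [e1 _] := Bagree N _ k0 HN.
have [_ _ _ _ [hy ny]] := HT N.
apply: ny.
have [_ e0] := HN 0%N k0; rewrite /ds in e0; rewrite e0.
suff hh : Bs ci k (T N).2 by apply: Hk; exact: hh.
rewrite -e1 /cs.
have ecN : edge_path (T N).1.1.1 by case: (HT N) => e _ _ _ _; exact: e.
apply: (stepB Hact HQ'f ecN k0).
apply: (nestBc Hact HQ'f ecN (ltn0Sn k) _ hy).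
by rewrite ltnS.
Qed.

Theorem lemmaA1 (G : groupType) (M : topologicalType) (act : G -> M -> M)
  (Hact : action_by_homeos act) (HM : hausdorff_space M)
  (F : set G) (HF : finite_set F)
  (Q Q' : point_coder act)
  (HQ : is_finitary_point_coder Q) (HQ' : is_finitary_point_coder Q') :
  exists N : nat,
    forall (p : M) (g0 : G) (c : nat -> cE Q') (h0 : G) (d : nat -> cE Q),
      gen_codes g0 c p -> gen_codes h0 d p ->
      forall m n : nat, (0 < m)%N -> (0 < n)%N ->
        F ((path_seq g0 c n)^-1 * path_seq h0 d m) ->
        act (path_seq g0 c (n + N)) @` closure (cW (term_vertex c (n + N)))
        `<=` act (path_seq h0 d m) @` cW (term_vertex d m).
Proof.
have [Nf HNf] := choice (Good_ex Hact HM HQ HQ').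
have [nb Hnb] := nat_bounded (finite_image Nf HF).
exists nb.+1 => p g0 c h0 d [q0 Hq0 e0] [r0 Hr0 er] m n m0 n0 Ff y [z Hz <-].
pose f := (path_seq g0 c n)^-1 * path_seq h0 d m.
have Gf : Good Q Q' f nb.+1.
  apply: (Good_mono Hact HQ' (HNf f).2 (HNf f).1).
  apply: leqW; apply: Hnb; by exists f.
pose c' := fun i => c (n + i)%N. pose d' := fun i => d (m + i)%N.
have ec := Hq0.1. have ed := Hr0.1.
have ec' : edge_path c' by move=> k; rewrite /c' addnS; exact: ec.
have ed' : edge_path d' by move=> k; rewrite /d' addnS; exact: ed.
pose x := act (path_seq g0 c n)^-1 p.
have hc : forall k, (0 < k)%N -> Bs c' k x.
  move=> k k0.
  have [w Hw Hwe] := nbhs_singleton (Hq0.2.1 (n + k)%N (ltn_addr _ n0)).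
  exists w; first by rewrite -(tv_shift c n k0).
  rewrite /x -e0 -Hwe (path_seq_shift 1 c n k) (path_seqE g0 c n) -!(actM Hact).
  by rewrite -mulgA (mulgA g0) mulKg.
have hd : forall k, (0 < k)%N -> (act f @` Bs d' k) x.
  move=> k k0.
  have [w Hw Hwe] := nbhs_singleton (Hr0.2.1 (m + k)%N (ltn_addr _ m0)).
  exists (act (path_seq 1 d' k) w).
    exists w => //; by rewrite -(tv_shift d m k0).
  rewrite /x /f -er -Hwe (path_seq_shift 1 d m k) (path_seqE h0 d m) -!(actM Hact).
  by rewrite !mulgA.
have hb : Bcs c' nb.+1 (act (path_seq 1 c' nb.+1) z).
  by exists z => //; rewrite -(tv_shift c n (ltn0Sn nb)).
have [w Hw Hwe] := Gf c' d' x ec' ed' hc hd _ hb.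
exists w.
  have e1 : term_vertex d m = csrc (d' 0%N) by rewrite /d' addn0 /term_vertex ed prednK.
  by rewrite e1.
rewrite (path_seq_shift g0 c n) (actM Hact) -Hwe -(actM Hact) /f.
by rewrite mulgA mulgV mul1g.
Qed.
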